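(* Let $P=R\cup B$ where $R$ is a set of $n$ red points and $B$ a set of $n$ blue points, all distinct and on the line $y=0$, and let $p_1<p_2<\dots<p_{2n}$ be the points of $P$ sorted by $x$-coordinate. Let $2m$ be the smallest positive integer such that $\{p_1,\dots,p_{2m}\}$ contains equally many red and blue points (so $P_1=\{p_1,\dots,p_{2m}\}$ is the first color-balanced prefix). Then $p_1$ and $p_{2m}$ have different colors, and every minimum-weight non-crossing bichromatic perfect matching of $P$ contains the edge $\{p_1,p_{2m}\}$. *)

(* Defs.v *)
From HB Require Import structures.
From mathcomp Require Import all_boot all_order all_algebra.
Set Implicit Arguments. Unset Strict Implicit. Unset Printing Implicit Defensive.
Import Order.TTheory GRing.Theory Num.Theory.
Local Open Scope ring_scope.

(* Points of P are indexed by 'I_N in increasing order of x-coordinate: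
   index i (0-based) is the point p_{i+1}.  The set of red indices is [red];
   the others are blue. *)

Definition perfect_matching (N : nat) (f : 'I_N -> 'I_N) : Prop :=
  forall i, f (f i) = i /\ f i != i.

Definition bichromatic (N : nat) (red : {set 'I_N}) (f : 'I_N -> 'I_N) : Prop :=
  forall i, (i \in red) != (f i \in red).

Definition noncrossing (N : nat) (f : 'I_N -> 'I_N) : Prop :=
  forall i j : 'I_N, ~ [/\ (i < j)%N, (j < f i)%N & (f i < f j)%N].

Definition mweight (R : realFieldType) (N : nat) (x : 'I_N -> R)
  (f : 'I_N -> 'I_N) : R :=
  \sum_(i : 'I_N | (i < f i)%N) `|x (f i) - x i|.

Definition admissible (N : nat) (red : {set 'I_N}) (f : 'I_N -> 'I_N) : Prop :=
  [/\ perfect_matching f, bichromatic red f & noncrossing f].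

Definition min_weight_matching (R : realFieldType) (N : nat) (x : 'I_N -> R)
  (red : {set 'I_N}) (f : 'I_N -> 'I_N) : Prop :=
  admissible red f /\
  forall g, admissible red g -> mweight x f <= mweight x g.

Definition balanced_prefix (N : nat) (red : {set 'I_N}) (k : nat) : bool :=
  #|[set i : 'I_N | (i < k)%N & i \in red]| ==
  #|[set i : 'I_N | (i < k)%N & i \notin red]|.

(* Main.v *)
Require Import Defs.
From HB Require Import structures.
From mathcomp Require Import all_boot all_order all_algebra.
From mathcomp Require Import zify ring lra.
Import Order.TTheory GRing.Theory Num.Theory.
Set Implicit Arguments. Unset Strict Implicit.
Local Open Scope ring_scope.

Definition cr (N : nat) (A : {set 'I_N}) (k : nat) : nat :=
  #|[set i : 'I_N | (i < k)%N & i \in A]|.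

Lemma balE N (red : {set 'I_N}) k :
  balanced_prefix red k = (cr red k == cr (~: red) k).
Proof.
rewrite /balanced_prefix /cr (_ : [set i : 'I_N | (i < k)%N & i \notin red] = [set i : 'I_N | (i<k)%N & i \in ~: red]) //.
by apply/setP => i; rewrite !inE.
Qed.

Lemma cr0 N (A : {set 'I_N}) : cr A 0 = 0%N.
Proof. rewrite /cr (_ : [set _ | _] = set0) ?cards0 //; apply/setP => i; by rewrite !inE ltn0. Qed.

Lemma crS N (A : {set 'I_N}) k (hk : (k < N)%N) :
  cr A k.+1 = (cr A k + (Ordinal hk \in A))%N.
Proof.
rewrite /cr.
case: (boolP (Ordinal hk \in A)) => h.
- have -> : [set i : 'I_N | (i < k.+1)%N & i \in A] = Ordinal hk |: [set i : 'I_N | (i < k)%N & i \in A].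
    apply/setP => i; rewrite !inE ltnS leq_eqVlt -[(nat_of_ord i == k)]/(i == Ordinal hk).
    by case: (eqVneq i (Ordinal hk)) => [->|] //=; rewrite h.
  by rewrite cardsU1 inE ltnn /= addnC.
- rewrite addn0 (_ : [set i : 'I_N | (i < k.+1)%N & i \in A] = [set i : 'I_N | (i < k)%N & i \in A]) //.
  apply/setP => i; rewrite !inE ltnS leq_eqVlt -[(nat_of_ord i == k)]/(i == Ordinal hk).
  by case: (eqVneq i (Ordinal hk)) => [->|] //=; rewrite (negbTE h) ?andbF.
Qed.

Lemma ivt (D : nat -> int) a k :
  (forall t, (a <= t)%N -> (t < a + k)%N -> D t.+1 = D t + 1 \/ D t.+1 = D t - 1) ->
  0 < D a -> D (a + k)%N < 0 -> exists t, [/\ (a < t)%N, (t < a + k)%N & D t = 0].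
Proof.
elim: k a => [|k IH] a hs hpos hneg; first by exfalso; move: hneg; rewrite addn0 => hneg; lia.
have h1 := hs a (leqnn a) ltac:(lia).
have [hz|/eqP hnz] := eqVneq (D a.+1) 0.
- case: k IH hs hneg => [|k] IH hs hneg.
  + by rewrite addn1 hz in hneg.
  + by exists a.+1; split => //; lia.
- have hp : 0 < D a.+1 by lia.
  have hneg' : D (a.+1 + k)%N < 0 by rewrite addSnnS.
  have hs' : forall t, (a.+1 <= t)%N -> (t < a.+1 + k)%N -> D t.+1 = D t + 1 \/ D t.+1 = D t - 1.
    by move=> t h1' h2'; apply: hs; lia.
  have [t [ht1 ht2 ht3]] := IH a.+1 hs' hp hneg'.
  by exists t; split => //; lia.
Qed.

Lemma ends_diff N (A : {set 'I_N}) m (hm : (0 < m)%N) (hmN : (m.*2 <= N)%N)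
  (hb : cr A m.*2 = cr (~: A) m.*2)
  (hmin : forall k, (0 < k)%N -> (k < m.*2)%N -> cr A k != cr (~: A) k)
  (i0 i1 : 'I_N) (h0 : val i0 = 0%N) (h1 : val i1 = (m.*2).-1) :
  i0 \in A -> i1 \in A -> False.
Proof.
move=> hA0 hA1.
pose D t := (cr A t)%:Z - (cr (~: A) t)%:Z.
have step t (ht : (t < N)%N) : D t.+1 = D t + (if Ordinal ht \in A then 1 else -1).
  rewrite /D (crS A ht) (crS (~:A) ht) in_setC; case: (Ordinal ht \in A) => /=; lia.
have hN : (0 < N)%N by lia.
have D0 : D 0%N = 0 by rewrite /D !cr0.
have D1 : D 1%N = 1.
  rewrite (step 0%N hN) D0 (_ : Ordinal hN = i0) ?hA0 //; exact: val_inj.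
have hN1 : ((m.*2).-1 < N)%N by lia.
have D2 : D (m.*2) = 0 by rewrite /D hb subrr.
have D3 : D (m.*2).-1 = -1.
  have := step _ hN1; rewrite (_ : Ordinal hN1 = i1) ?hA1; last exact: val_inj.
  rewrite prednK ?D2; [lia | lia].
have [hm1|hm1] := eqVneq m 1%N.
  by move: D3; rewrite hm1 /= D1.
have hs : forall t, (1 <= t)%N -> (t < 1 + (m.*2.-1 - 1))%N -> D t.+1 = D t + 1 \/ D t.+1 = D t - 1.
  move=> t ht1 ht2; have htN : (t < N)%N by lia.
  rewrite (step t htN); case: (Ordinal htN \in A); by [left | right].
have hp1 : 0 < D 1%N by rewrite D1.
have hn1 : D (1 + (m.*2.-1 - 1))%N < 0 by rewrite (_ : (1 + _)%N = (m.*2).-1) ?D3 //; lia.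
have [t [ht1 ht2 ht3]] := ivt hs hp1 hn1.
have := hmin t ltac:(lia) ltac:(lia).
by move: ht3; rewrite /D => /eqP; rewrite subr_eq0 => /eqP [->]; rewrite eqxx.
Qed.

Definition Iset N (f : 'I_N -> 'I_N) (A : {set 'I_N}) k :=
  [set i : 'I_N | [&& (i < k)%N, (f i < k)%N & i \in A]].
Definition Sset N (f : 'I_N -> 'I_N) (A : {set 'I_N}) k :=
  [set i : 'I_N | [&& (i < k)%N, (k <= f i)%N & i \in A]].

Lemma split_cr N (f : 'I_N -> 'I_N) A k :
  cr A k = (#|Iset f A k| + #|Sset f A k|)%N.
Proof.
rewrite /cr -(cardsID [set i : 'I_N | (f i < k)%N]).
rewrite (_ : _ :&: _ = Iset f A k); last by apply/setP => i; rewrite !inE; case: (i < k)%N; case: (f i < k)%N; case: (i \in A).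
rewrite (_ : _ :\: _ = Sset f A k) //; apply/setP => i; rewrite !inE -leqNgt.
by case: (i < k)%N; case: (k <= f i)%N; case: (i \in A).
Qed.

Lemma inner_bal N (f : 'I_N -> 'I_N) (red : {set 'I_N}) (k : nat)
  (ff : forall i, f (f i) = i) (hbi : forall i, (i \in red) != (f i \in red)) :
  #|Iset f red k| = #|Iset f (~: red) k|.
Proof.
have finj : injective f by move=> i j /(congr1 f); rewrite !ff.
rewrite -(card_imset _ finj) (_ : [set f x | x in Iset f red k] = Iset f (~: red) k) //.
apply/setP => j; rewrite [in RHS]inE; apply/imsetP/idP.
- case=> i; rewrite inE => /and3P[hi hfi hr] ->.
  rewrite hfi ff hi inE /=; move: (hbi i); rewrite hr; by case: (f i \in red).
- move=> /and3P[hj hfj hb]; exists (f j); last by rewrite ff.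
  rewrite inE hfj ff hj /=; move: (hbi j) hb; rewrite inE; by case: (j \in red); case: (f j \in red).
Qed.

Lemma exchange (R : realFieldType) N (x : 'I_N -> R)
  (hx : forall i j : 'I_N, (i < j)%N -> x i < x j) (red : {set 'I_N})
  (f : 'I_N -> 'I_N) (hf : admissible red f) (a1 a2 : 'I_N) (k : nat)
  (h12 : (a1 < a2)%N) (h2k : (a2 < k)%N) (hk1 : (k <= f a1)%N) (hk2 : (k <= f a2)%N)
  (hcol : (a1 \in red) != (a2 \in red))
  (hclose : forall s : 'I_N, (a1 < s)%N -> (s < a2)%N -> (s < k)%N -> (f s < k)%N) :
  exists g, admissible red g /\ mweight x g < mweight x f.
Proof.
case: hf => hpm hbi hnc.
have ff i : f (f i) = i := (hpm i).1.
have fne i : f i != i := (hpm i).2.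
have finj : injective f by move=> i j /(congr1 f); rewrite !ff.
have hnc' : forall u v : 'I_N, (u < v)%N -> (v < f u)%N -> (f u < f v)%N -> False.
  by move=> u v a b c; apply: (hnc u v); split.
have nl : forall u v : 'I_N, (u < v)%N -> (u != v) /\ (v != u).
  by move=> u v h; split; apply/eqP => e; rewrite e ltnn in h.
have hb21 : (f a2 < f a1)%N.
  have hne : (f a2 : nat) <> f a1.
    move=> /val_inj e; have := congr1 f e; rewrite !ff => e'; by rewrite e' ltnn in h12.
  have := hnc' a1 a2 h12; lia.
have [n12 n21] := nl _ _ h12.
have [n1b2 nb21] := nl a1 (f a2) ltac:(lia).
have [n1b1 nb11] := nl a1 (f a1) ltac:(lia).
have [n2b2 nb22] := nl a2 (f a2) ltac:(lia).
have [n2b1 nb12] := nl a2 (f a1) ltac:(lia).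
have [nb2b1 nb1b2] := nl _ _ hb21.
pose g (i : 'I_N) := if i == a1 then a2 else if i == a2 then a1 else
            if i == f a1 then f a2 else if i == f a2 then f a1 else f i.
have ga1 : g a1 = a2 by rewrite /g eqxx.
have ga2 : g a2 = a1 by rewrite /g (negbTE n21) eqxx.
have gb1 : g (f a1) = f a2 by rewrite /g (negbTE nb11) (negbTE nb12) eqxx.
have gb2 : g (f a2) = f a1 by rewrite /g (negbTE nb21) (negbTE nb22) (negbTE nb2b1) eqxx.
have gO (i : 'I_N) : i != a1 -> i != a2 -> i != f a1 -> i != f a2 -> g i = f i.
  by move=> e1 e2 e3 e4; rewrite /g (negbTE e1) (negbTE e2) (negbTE e3) (negbTE e4).
have fO (i : 'I_N) : i != a1 -> i != a2 -> i != f a1 -> i != f a2 ->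
    [/\ f i != a1, f i != a2, f i != f a1 & f i != f a2].
  move=> e1 e2 e3 e4; split; apply/eqP => e.
  - by move/eqP: e3; rewrite -e ff.
  - by move/eqP: e4; rewrite -e ff.
  - by move/eqP: e1; rewrite -(finj _ _ e).
  - by move/eqP: e2; rewrite -(finj _ _ e).
have nat_ne (u v : 'I_N) : u != v -> (u : nat) <> v.
  by move=> h e; move/eqP: h; apply; exact: val_inj.
have gP (i : 'I_N) : ((i : nat) = a1 /\ (g i : nat) = a2) \/ ((i : nat) = a2 /\ (g i : nat) = a1) \/
    ((i : nat) = f a1 /\ (g i : nat) = f a2) \/ ((i : nat) = f a2 /\ (g i : nat) = f a1) \/
    [/\ (i : nat) <> a1, (i : nat) <> a2, (i : nat) <> f a1, (i : nat) <> f a2 & (g i : nat) = f i].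
  have [->|e1] := eqVneq i a1; first by left; rewrite ga1.
  have [->|e2] := eqVneq i a2; first by right; left; rewrite ga2.
  have [->|e3] := eqVneq i (f a1); first by right; right; left; rewrite gb1.
  have [->|e4] := eqVneq i (f a2); first by right; right; right; left; rewrite gb2.
  right; right; right; right; split; try exact: nat_ne.
  by rewrite gO.
clearbody g.
exists g; split; first split.
- move=> i.
  have [->|e1] := eqVneq i a1; first by rewrite ga1 ga2.
  have [->|e2] := eqVneq i a2; first by rewrite ga2 ga1.
  have [->|e3] := eqVneq i (f a1); first by rewrite gb1 gb2.
  have [->|e4] := eqVneq i (f a2); first by rewrite gb2 gb1.
  have [m1 m2 m3 m4] := fO i e1 e2 e3 e4.
  by rewrite (gO i) // (gO (f i)) // ff; split => //; exact: fne.
- move=> i.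
  have [->|e1] := eqVneq i a1; first by rewrite ga1.
  have [->|e2] := eqVneq i a2; first by rewrite ga2 eq_sym.
  have [->|e3] := eqVneq i (f a1); first by rewrite gb1;
    move: (hbi a1) (hbi a2) hcol; case: (a1 \in red); case: (a2 \in red); case: (f a1 \in red); case: (f a2 \in red).
  have [->|e4] := eqVneq i (f a2); first by rewrite gb2;
    move: (hbi a1) (hbi a2) hcol; case: (a1 \in red); case: (a2 \in red); case: (f a1 \in red); case: (f a2 \in red).
  by rewrite (gO i).
- move=> i j [h1 h2 h3].
  move: (gP i) (gP j); clear ga1 ga2 gb1 gb2 gO fO gP nat_ne nl hpm hbi hnc hcol.
  clear n12 n21 n1b2 nb21 n1b1 nb11 n2b2 nb22 n2b1 nb12 nb2b1 nb1b2 fne finj ff.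
  case=> [[ei gi]|[[ei gi]|[[ei gi]|[[ei gi]|[ei1 ei2 ei3 ei4 gi]]]]];
  case=> [[ej gj]|[[ej gj]|[[ej gj]|[[ej gj]|[ej1 ej2 ej3 ej4 gj]]]]].
  25: by apply: (hnc' i j); lia.
  24: by have := hnc' a2 i; have := hnc' i a1; have := hclose i; lia.
  21: by apply: (hnc' i a1); lia.
  20: by apply: (hnc' a1 j); lia.
  5: by have := hclose j; have := hnc' j a2; lia.
  1-20: lia.
have nrm (u v : 'I_N) : (u < v)%N -> `|x v - x u| = x v - x u.
  by move=> h; rewrite ger0_norm // subr_ge0 ltW // hx.
rewrite /mweight (big_mkcond (fun i : 'I_N => (i < f i)%N)) (big_mkcond (fun i : 'I_N => (i < g i)%N)) /= -subr_gt0 -sumrB.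
rewrite (bigD1 a1) //= (bigD1 a2) //= (bigD1 (f a1)) //=.
rewrite (@bigD1 _ _ _ _ (f a2) (fun i => (i != a1) && (i != a2) && (i != f a1))) /=; last by rewrite nb21 nb22 nb2b1.
rewrite big1; last first.
  move=> i /andP[/andP[/andP[e1 e2] e3] e4]; by rewrite gO // subrr.
rewrite ga1 ga2 gb1 gb2 !ff h12.
have ha1b1 : (a1 < f a1)%N := leq_trans (ltn_trans h12 h2k) hk1.
have ha2b2 : (a2 < f a2)%N := leq_trans h2k hk2.
rewrite ha1b1 ha2b2 hb21 (ltnNge a2) (ltnW h12) (ltnNge (f a1)) (ltnW ha1b1).
rewrite (ltnNge (f a1) (f a2)) (ltnW hb21) (ltnNge (f a2) a2) (ltnW ha2b2) /=.
rewrite !nrm //.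
have := hx a2 (f a2) ha2b2.
lra.
by rewrite nb11 nb12.
Qed.


Theorem mainTheorem5 (R : realFieldType) (n : nat)
  (x : 'I_(n.*2) -> R) (hx : forall i j : 'I_(n.*2), (i < j)%N -> x i < x j)
  (red : {set 'I_(n.*2)}) (hred : #|red| = n)
  (m : nat) (hm0 : (0 < m)%N) (hmn : (m <= n)%N)
  (hbal : balanced_prefix red m.*2)
  (hmin : forall k : nat, (0 < k)%N -> (k < m.*2)%N -> ~~ balanced_prefix red k)
  (p1 p2m : 'I_(n.*2)) (hp1 : val p1 = 0%N) (hp2m : val p2m = (m.*2).-1) :
  (p1 \in red) != (p2m \in red) /\
  forall f : 'I_(n.*2) -> 'I_(n.*2), min_weight_matching x red f -> f p1 = p2m.
Proof.
have hmN : (m.*2 <= n.*2)%N by rewrite leq_double.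
have hbal' : cr red m.*2 = cr (~: red) m.*2 by apply/eqP; rewrite -balE.
have hmin' : forall k, (0 < k)%N -> (k < m.*2)%N -> cr red k != cr (~: red) k.
  by move=> k h1 h2; rewrite -balE; exact: hmin.
split.
  apply/negP => /eqP heq.
  case: (boolP (p1 \in red)) => h.
  - apply: (ends_diff hm0 hmN hbal' hmin' hp1 hp2m h); by rewrite -heq.
  - apply: (@ends_diff _ (~: red) m hm0 hmN _ _ p1 p2m hp1 hp2m).
    + by rewrite setCK hbal'.
    + by move=> k h1 h2; rewrite setCK eq_sym; exact: hmin'.
    + by rewrite inE.
    + by rewrite inE -heq.
move=> f [[hpm hbi hnc] hmw].
have ff i : f (f i) = i := (hpm i).1.
have hS : forall i : 'I_(n.*2), (i < m.*2)%N -> (f i < m.*2)%N.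
  move=> i hi; rewrite ltnNge; apply/negP => hfi.
  have hsp := split_cr f red m.*2.
  have hsp' := split_cr f (~: red) m.*2.
  have hin := inner_bal m.*2 ff hbi.
  have hpos : (0 < #|Sset f red m.*2| + #|Sset f (~: red) m.*2|)%N.
    case: (boolP (i \in red)) => hr.
    + have : i \in Sset f red m.*2 by rewrite inE hi hfi hr.
      by move=> H; rewrite addn_gt0; apply/orP; left; apply/card_gt0P; exists i.
    + have : i \in Sset f (~: red) m.*2 by rewrite inE hi hfi inE hr.
      by move=> H; rewrite addn_gt0; apply/orP; right; apply/card_gt0P; exists i.
  have [r hr] : exists r, r \in Sset f red m.*2 by apply/card_gt0P; lia.
  have [b hb] : exists b, b \in Sset f (~: red) m.*2 by apply/card_gt0P; lia.
  move: hr hb; rewrite !inE => /and3P[hr1 hr2 hr3] /and3P[hb1 hb2 hb3].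
  pose P (p : 'I_(n.*2) * 'I_(n.*2)) := [&& (p.1 < m.*2)%N, (m.*2 <= f p.1)%N, (p.2 < m.*2)%N,
     (m.*2 <= f p.2)%N, (p.1 < p.2)%N & (p.1 \in red) != (p.2 \in red)].
  pose p0 := if (r < b)%N then (r, b) else (b, r).
  have hp0 : P p0.
    have [hrb|hrb] := ltnP r b.
    + by rewrite /P /p0 hrb /= hr1 hr2 hb1 hb2 hrb hr3 (negbTE hb3).
    + have hne : (b : nat) <> r.
        by move=> /val_inj e; move: hb3; rewrite e hr3.
      rewrite /P /p0 (ltnNge r b) hrb /= hr1 hr2 hb1 hb2 hr3 (negbTE hb3) /= andbT; lia.
  case: (arg_minnP (fun p : 'I_(n.*2) * 'I_(n.*2) => (p.2 - p.1)%N) hp0) => [[a1 a2] hP hminp].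
  move: hP; rewrite /P /= => /and5P[h1 h2 h3 h4 /andP[h12 hc]].
  have hclose : forall s : 'I_(n.*2), (a1 < s)%N -> (s < a2)%N -> (s < m.*2)%N -> (f s < m.*2)%N.
    move=> s hs1 hs2 hsk; rewrite ltnNge; apply/negP => hsf.
    case: (eqVneq (s \in red) (a1 \in red)) => e.
    - have := hminp (s, a2); rewrite /P /= hsk hsf h3 h4 hs2 e hc /=; lia.
    - have := hminp (a1, s); rewrite /P /= hsk hsf h1 h2 hs1 eq_sym e /=; lia.
  have [g [hg hlt]] := exchange hx (And3 hpm hbi hnc) h12 h3 h2 h4 hc hclose.
  by have := hmw g hg; rewrite leNgt hlt.
have hall : forall i : 'I_(n.*2), (i < (f p1).+1)%N -> (f i < (f p1).+1)%N.
  move=> i hi; case: (eqVneq i p1) => [->|ne]; first exact: leqnn.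
  rewrite ltnS leqNgt; apply/negP => hgt.
  have ne' : (i : nat) <> p1 by move=> /val_inj e; move/eqP: ne.
  case: (eqVneq i (f p1)) => [e|ne2].
    by move: hgt; rewrite e ff hp1.
  have ne2' : (i : nat) <> f p1 by move=> /val_inj e; move/eqP: ne2.
  have hp1' : (p1 : nat) = 0%N := hp1.
  apply: (hnc p1 i); split => //; lia.
have hbalj : cr red (f p1).+1 = cr (~: red) (f p1).+1.
  have e A : Sset f A (f p1).+1 = set0.
    apply/setP => i; rewrite !inE; case h: (i < (f p1).+1)%N => //=.
    by rewrite leqNgt hall.
  by rewrite (split_cr f red) (split_cr f (~: red)) (inner_bal _ ff hbi) !e.
have hge : ~ ((f p1).+1 < m.*2)%N.
  by move=> hlt; move: (hmin _ (ltn0Sn _) hlt); rewrite balE hbalj eqxx.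
have hlt : (f p1 < m.*2)%N by apply: hS; rewrite hp1 double_gt0.
apply: val_inj; rewrite hp2m; change ((f p1 : nat) = (m.*2).-1); lia.
Qed.
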